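(* Let $B_J\in\mathbb R^{n\times n}$ satisfy $\|B_J\|_\infty<1$ (strict diagonal dominance by rows of $A=I-B_J$), and let $\mathcal B$ be any splitting of $B_J$. Then $\rho(T(\mathcal B))<1$, so the associated iterative scheme converges.
   Context: For $B\in\mathbb R^{n\times n}$, a splitting of $B$ of order $d\ge1$ is an ordered $d$-tuple $\mathcal B=(B_1,\dots,B_d)$ of real $n\times n$ matrices with $B_p\neq O$ for all $p$, $\sum_{p=1}^d B_p=B$, and $B_p\circ B_q=O$ (Hadamard product) for $p\ne q$. The iteration matrix of $\mathcal B$ is the $dn\times dn$ matrix $T(\mathcal B)=(I_{dn}-\mathcal L)^{-1}\mathcal U$, where $\mathcal L,\mathcal U$ are $d\times d$ block matrices with $n\times n$ blocks, $\mathcal L_{ij}=B_j$ if $i>j$ and $O$ otherwise, $\mathcal U_{ij}=B_j$ if $i\le j$ and $O$ otherwise. The associated scheme is $X^{(k+1)}=T(\mathcal B)X^{(k)}+\Gamma$. $\rho$ is spectral radius, $\|\cdot\|_\infty$ the maximum-row-sum norm. *)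

(* Defs.v *)
From HB Require Import structures.
From mathcomp Require Import all_boot all_order all_algebra.
From mathcomp Require Import complex.
Set Implicit Arguments. Unset Strict Implicit. Unset Printing Implicit Defensive.
Import Order.TTheory GRing.Theory Num.Theory.
Local Open Scope ring_scope.

Definition norm_inf (R : realDomainType) (n : nat) (M : 'M[R]_n) : R :=
  \big[Num.max/0]_(i < n) \sum_(j < n) `|M i j|.

Definition hadamard (R : pzRingType) (m n : nat) (A B : 'M[R]_(m, n)) : 'M[R]_(m, n) :=
  \matrix_(i, j) (A i j * B i j).

Definition is_splitting (R : pzRingType) (n d : nat) (B : 'M[R]_n)
    (Bs : 'I_d -> 'M[R]_n) : Prop :=
  [/\ (1 <= d)%N,
      forall p, Bs p != 0,
      \sum_(p < d) Bs p = B &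
      forall p q, p != q -> hadamard (Bs p) (Bs q) = 0].

(* The d x d block matrices L and U (blocks of size n x n) and the
   iteration matrix T = (I - L)^{-1} U, of size dn x dn written as
   'M_(\sum_(i < d) n). *)
Definition blockL (R : pzRingType) (n d : nat) (Bs : 'I_d -> 'M[R]_n)
  : 'M[R]_(\sum_(i < d) n) :=
  \mxblock_(i < d, j < d) (if (j < i)%N then Bs j else 0).

Definition blockU (R : pzRingType) (n d : nat) (Bs : 'I_d -> 'M[R]_n)
  : 'M[R]_(\sum_(i < d) n) :=
  \mxblock_(i < d, j < d) (if (i <= j)%N then Bs j else 0).

Definition iteration_matrix (R : comUnitRingType) (n d : nat)
    (Bs : 'I_d -> 'M[R]_n) : 'M[R]_(\sum_(i < d) n) :=
  invmx (1%:M - blockL Bs) *m blockU Bs.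

(* Complex spectrum (eigenvalues with algebraic multiplicity) of a real
   square matrix: the roots in R[i] of its characteristic polynomial. *)
Definition spectrum (R : rcfType) (m : nat) (M : 'M[R]_m) : seq R[i] :=
  sval (closed_field_poly_normal (char_poly (map_mx (real_complex R) M))).

Definition spectral_radius (R : rcfType) (m : nat) (M : 'M[R]_m) : R :=
  \big[Num.max/0]_(z <- spectrum M) Normc.normc z.

(* Main.v *)
Require Import Defs.
From HB Require Import structures.
From mathcomp Require Import all_boot all_order all_algebra.
From mathcomp Require Import complex.
Import Order.TTheory GRing.Theory Num.Theory.
Local Open Scope ring_scope.
Import tagnat.

Lemma blockLE (R : pzRingType) (n d : nat) (Bs : 'I_d -> 'M[R]_n) r s :
  blockL Bs r s = if (sig1 s < sig1 r)%N then Bs (sig1 s) (sig2 r) (sig2 s) else 0.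
Proof. rewrite /blockL mxE. by case: ifP => _ //; rewrite mxE. Qed.

Lemma blockUE (R : pzRingType) (n d : nat) (Bs : 'I_d -> 'M[R]_n) r s :
  blockU Bs r s = if (sig1 r <= sig1 s)%N then Bs (sig1 s) (sig2 r) (sig2 s) else 0.
Proof. rewrite /blockU mxE. by case: ifP => _ //; rewrite mxE. Qed.

Lemma sum_sig (V : nmodType) (n d : nat) (F : 'I_d -> 'I_n -> V) :
  \sum_(s < \sum_(i < d) n) F (sig1 s) (sig2 s) = \sum_(j < d) \sum_(l < n) F j l.
Proof.
rewrite (sig_big_dep (fun j : 'I_d => true) (fun j (l : 'I_n) => true) (fun j (l : 'I_n) => F j l)) /=.
rewrite (reindex (@sig d (fun=> n))) /=; last by exists rank => x _; [rewrite sigK|rewrite rankK].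
by apply: eq_bigr => s _.
Qed.

Lemma abs_split (R : realDomainType) (n d : nat) (BJ : 'M[R]_n) (Bs : 'I_d -> 'M[R]_n) k l :
  \sum_(p < d) Bs p = BJ ->
  (forall p q, p != q -> hadamard (Bs p) (Bs q) = 0) ->
  \sum_(j < d) `|Bs j k l| = `|BJ k l|.
Proof.
move=> HS HH; rewrite -HS summxE.
have Hz : forall j j0, j != j0 -> Bs j0 k l != 0 -> Bs j k l = 0.
  move=> j j0 ne nz; have := congr1 (fun M : 'M[R]_n => M k l) (HH _ _ ne).
  rewrite !mxE => /eqP; rewrite mulf_eq0 (negbTE nz) orbF => /eqP //.
case: (pickP (fun j => Bs j k l != 0)) => [j0 Hj0 | H0].
  rewrite (bigD1 j0) //= [in RHS](bigD1 j0) //= !big1 ?addr0 // => j ne;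
  by rewrite (Hz j j0 ne Hj0) ?normr0.
rewrite !big1 ?normr0 // => j _; have := H0 j => /= /negbFE /eqP -> //.
by rewrite normr0.
Qed.

Section NC.
Variable R : rcfType.
Import Normc.

Lemma normc_ge0 (x : R[i]) : 0 <= normc x.
Proof. by case: x => a b; rewrite /normc sqrtr_ge0. Qed.

Lemma normcR (r : R) : normc (r%:C)%C = `|r|.
Proof. by rewrite /normc /= expr0n /= addr0 sqrtr_sqr. Qed.

Lemma normc_sum (I : Type) (s : seq I) (F : I -> R[i]) :
  normc (\sum_(i <- s) F i) <= \sum_(i <- s) normc (F i).
Proof.
elim: s => [|a s IH]; first by rewrite !big_nil normc0.
rewrite !big_cons; apply: le_trans (@le_normcD R _ _) _.
by rewrite lerD2l.
Qed.
End NC.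

Lemma core (R : rcfType) (n d : nat) (BJ : 'M[R]_n) (Bs : 'I_d -> 'M[R]_n)
   (z : R[i]) (w : 'cV[R[i]]_(\sum_(i < d) n)) :
  norm_inf BJ < 1 ->
  \sum_(p < d) Bs p = BJ ->
  (forall p q, p != q -> hadamard (Bs p) (Bs q) = 0) ->
  w != 0 ->
  map_mx (real_complex R) (blockU Bs) *m w =
     z *: ((1%:M - map_mx (real_complex R) (blockL Bs)) *m w) ->
  Normc.normc z < 1.
Proof.
move=> Hn HS HH w0 Heq.
rewrite ltNge; apply/negP => Hz1.
have /existsP [r1 Hr1] : [exists r, w r 0 != 0].
  apply: contraNT w0 => /existsPn H; apply/eqP/matrixP => i j.
  by rewrite ord1 mxE; apply/eqP/negbNE/H.
pose F r := Normc.normc (w r 0).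
have [r0 _ Hmax] := @arg_maxP _ _ _ r1 xpredT F isT.
set m := F r0.
have m_gt0 : 0 < m.
  apply: lt_le_trans (Hmax r1 isT); rewrite lt_def normc_ge0 andbT.
  by apply: contra Hr1 => /eqP/Normc.eq0_normc ->.
set k := sig2 r0.
pose b (s : 'I_(\sum_(i < d) n)) := Bs (sig1 s) k (sig2 s).
have E : z * w r0 0 = \sum_s (real_complex R (blockU Bs r0 s) + z * real_complex R (blockL Bs r0 s)) * w s 0.
  have := congr1 (fun M : 'cV[R[i]]_(\sum_(i < d) n) => M r0 ord0) Heq.
  move=> E0; rewrite mulmxBl mul1mx [in RHS]mxE mxE [in RHS]mxE [in RHS]mxE in E0.
  rewrite mxE in E0.
  transitivity (\sum_s (real_complex R (blockU Bs r0 s) * w s 0 + z * (real_complex R (blockL Bs r0 s) * w s 0))); last first.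
    by apply: eq_bigr => s _; rewrite mulrDl mulrA.
  rewrite big_split /= -mulr_sumr.
  move: E0; set S1 := (X in X = _ -> _); set S2 := (X in _ = _ * (_ - X) -> _).
  have -> : S1 = \sum_s real_complex R (blockU Bs r0 s) * w s 0 by apply: eq_bigr => s _; rewrite mxE.
  have -> : S2 = \sum_s real_complex R (blockL Bs r0 s) * w s 0 by apply: eq_bigr => s _; rewrite mxE.
  by move=> ->; rewrite -mulrDr subrK.
have B1 : Normc.normc z * m <= \sum_s Normc.normc z * `|b s| * m.
  rewrite /m /F -Normc.normcM E; apply: le_trans; first exact: normc_sum.
  apply: ler_sum => s _; rewrite Normc.normcM; apply: ler_pM.
  - exact: normc_ge0.
  - exact: normc_ge0.
  - rewrite blockUE blockLE /b; case: (ltnP (sig1 s) (sig1 r0)) => h.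
      by rewrite rmorph0 add0r Normc.normcM normcR.
    rewrite rmorph0 mulr0 addr0 normcR.
    by apply: ler_peMl.
  - exact: Hmax.
have Hs : \sum_s `|b s| <= norm_inf BJ.
  rewrite /b (@sum_sig _ n d (fun j l => `|Bs j k l|)) exchange_big /=.
  rewrite (eq_bigr (fun l => `|BJ k l|)); last by move=> l _; apply: abs_split.
  exact: (le_bigmax 0 (fun i => \sum_(j < n) `|BJ i j|) k).
have B2 : \sum_s Normc.normc z * `|b s| * m = Normc.normc z * m * \sum_s `|b s|.
  by rewrite mulr_sumr; apply: eq_bigr => s _; rewrite mulrAC.
rewrite B2 ler_pMr in B1; last first.
  by apply: mulr_gt0 => //; apply: lt_le_trans Hz1.
by have := le_lt_trans (le_trans B1 Hs) Hn; rewrite ltxx.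
Qed.

Lemma unit_IL {R : comUnitRingType} {n d : nat} (Bs : 'I_d -> 'M[R]_n) :
  (1%:M - blockL Bs) \in unitmx.
Proof.
have Ht : is_trig_mx (1%:M - blockL Bs).
  apply/is_trig_mxP => r s rs; rewrite !mxE.
  have /= : (r <= s)%O by rewrite leEord ltnW.
  move/le_sig1; rewrite leEord => h.
  rewrite ltnNge h /= mxE subr0 (_ : (r == s) = false) //; exact: (ltn_eqF rs).
rewrite unitmxE (det_trig Ht) big1 ?unitr1 // => r _.
by rewrite !mxE ltnn eqxx mxE subr0.
Qed.

Theorem corollary4p1 (R : rcfType) (n d : nat) (BJ : 'M[R]_n)
    (Bs : 'I_d -> 'M[R]_n) :
  norm_inf BJ < 1 ->
  is_splitting BJ Bs ->
  spectral_radius (iteration_matrix Bs) < 1.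
Proof.
move=> Hn [_ _ HS HH].
rewrite /spectral_radius big_seq; apply: bigmax_lt => // z.
set A := map_mx (real_complex R) (iteration_matrix Bs).
rewrite /spectrum; case: closed_field_poly_normal => r /= Hr Hz.
have Hroot : root (char_poly A) z.
  by rewrite Hr rootZ ?root_prod_XsubC // (monicP (char_poly_monic _)) oner_neq0.
have /det0P [v v0 Hv] : \det (z%:M - A)^T == 0.
  rewrite det_tr; rewrite -eigenvalue_root_char in Hroot.
  move/eigenvalueP: Hroot => [u Hu u0]; apply/det0P; exists u => //.
  by rewrite mulmxBr Hu mul_mx_scalar subrr.
have Hw : (z%:M - A) *m v^T = 0.
  by apply: trmx_inj; rewrite trmx_mul trmxK Hv trmx0.
have w0 : v^T != 0.
  by apply: contra v0 => /eqP H; apply/eqP; rewrite -[v]trmxK H trmx0.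
have HA : A *m v^T = z *: v^T.
  by apply/eqP; rewrite eq_sym -subr_eq0 -mul_scalar_mx -mulmxBl Hw.
have HU : (1%:M - blockL Bs) \in unitmx := unit_IL Bs.
apply: (@core R n d BJ Bs z (v^T) Hn HS HH w0).
have HUc : (1%:M - map_mx (real_complex R) (blockL Bs)) \in unitmx.
  by rewrite -(map_mx1 (real_complex R)) -map_mxB map_unitmx.
rewrite scalemxAr -HA /A /iteration_matrix map_mxM map_invmx map_mxB map_mx1.
by rewrite -[(invmx _ *m _) *m _]mulmxA mulKVmx.
Qed.
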